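(* Let $\Gamma$ be a finite subset of ${\sf Frm}$ and $A\in{\sf Frm}$. Then the following are equivalent: (i) $\vdash_{\sf WF_{N_2}}\bigwedge\Gamma\rightarrow A$; (ii) $\Gamma\Rightarrow A$ is derivable in ${\sf GWF_{N_2}}$; (iii) $\Gamma\Rightarrow A$ is derivable in ${\sf GWF^s_{N_2}}$.
   Context: Language: countably many atoms $p,q,\dots$, the constant $\bot$, and binary connectives $\wedge,\vee,\rightarrow$ ($\rightarrow$ is strict implication). ${\sf Frm}$ is the set of formulas built from atoms and $\bot$ with $\wedge,\vee,\rightarrow$; $A,B,C,D$ range over ${\sf Frm}$. Let $\supset$ be a new binary symbol (material implication) and ${\sf Frm_1}={\sf Frm}\cup\{A\supset B : A,B\in{\sf Frm}\}$ (no nesting of $\supset$). ${\sf Frm_2}$ is the smallest set containing ${\sf Frm_1}$ and closed under $\wedge$ and $\vee$; $X,Y,Z$ range over ${\sf Frm_2}$. Multi-succedent sequents are $\Gamma\Rightarrow\Delta$ with $\Gamma,\Delta$ finite multisets of ${\sf Frm_2}$-formulas. The calculus ${\sf GWF_{N_2}}$ has initial sequents $(id)$ $p,\Gamma\Rightarrow\Delta,p$ ($p$ an atom) and $(L_\bot)$ $\bot,\Gamma\Rightarrow\Delta$, and rules (premises / conclusion): $(L_\wedge)$ $X,Y,\Gamma\Rightarrow\Delta$ / $X\wedge Y,\Gamma\Rightarrow\Delta$; $(R_\wedge)$ $\Gamma\Rightarrow\Delta,X$ and $\Gamma\Rightarrow\Delta,Y$ / $\Gamma\Rightarrow\Delta,X\wedge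 Y$; $(L_\vee)$ $X,\Gamma\Rightarrow\Delta$ and $Y,\Gamma\Rightarrow\Delta$ / $X\vee Y,\Gamma\Rightarrow\Delta$; $(R_\vee)$ $\Gamma\Rightarrow\Delta,X,Y$ / $\Gamma\Rightarrow\Delta,X\vee Y$; $(L_\supset)$ $\Gamma\Rightarrow\Delta,A$ and $B,\Gamma\Rightarrow\Delta$ / $A\supset B,\Gamma\Rightarrow\Delta$; $(R_\supset)$ $A,\Gamma\Rightarrow\Delta,B$ / $\Gamma\Rightarrow\Delta,A\supset B$; $(LR_\rightarrow)$ $C\supset D,A\Rightarrow B$ / $\Gamma,C\rightarrow D\Rightarrow\Delta,A\rightarrow B$; $(R_\rightarrow)$ $A\Rightarrow B$ / $\Gamma\Rightarrow\Delta,A\rightarrow B$. The single-succedent calculus ${\sf GWF^s_{N_2}}$ (sequents $\Gamma\Rightarrow Z$, $Z\in{\sf Frm_2}$) has initial sequents $(id^s)$ $p,\Gamma\Rightarrow p$ and $(L^s_\bot)$ $\bot,\Gamma\Rightarrow Z$, and rules: $(L^s_\wedge)$ $X,Y,\Gamma\Rightarrow Z$ / $X\wedge Y,\Gamma\Rightarrow Z$; $(R^s_\wedge)$ $\Gamma\Rightarrow X$ and $\Gamma\Rightarrow Y$ / $\Gamma\Rightarrow X\wedge Y$; $(L^s_\vee)$ $X,\Gamma\Rightarrow Z$ and $Y,\Gamma\Rightarrow Z$ / $X\vee Y,\Gamma\Rightarrow Z$; $(R^s_{\vee_l})$ $\Gamma\Rightarrow X$ / $\Gamma\Rightarrow X\vee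 Y$; $(R^s_{\vee_r})$ $\Gamma\Rightarrow Y$ / $\Gamma\Rightarrow X\vee Y$; $(L^s_\supset)$ $A\supset B,\Gamma\Rightarrow A$ and $B,\Gamma\Rightarrow Z$ / $A\supset B,\Gamma\Rightarrow Z$; $(R^s_\supset)$ $A,\Gamma\Rightarrow B$ / $\Gamma\Rightarrow A\supset B$; $(LR^s_\rightarrow)$ $C\supset D,A\Rightarrow B$ / $\Gamma,C\rightarrow D\Rightarrow A\rightarrow B$; $(R^s_\rightarrow)$ $A\Rightarrow B$ / $\Gamma\Rightarrow A\rightarrow B$. In all rules $A,B,C,D\in{\sf Frm}$, $X,Y,Z\in{\sf Frm_2}$, $\Gamma,\Delta$ arbitrary finite multisets of ${\sf Frm_2}$-formulas. The Hilbert system ${\sf WF_{N_2}}$ over ${\sf Frm}$ has axiom schemes $A\rightarrow(A\vee B)$; $B\rightarrow(A\vee B)$; $(A\wedge B)\rightarrow A$; $(A\wedge B)\rightarrow B$; $A\wedge(B\vee C)\rightarrow(A\wedge B)\vee(A\wedge C)$; $A\rightarrow A$; $\bot\rightarrow A$; and rules (from theorems to a theorem): from $A$ and $A\rightarrow B$ infer $B$; from $A$ infer $B\rightarrow A$; from $A\rightarrow B$ and $B\rightarrow C$ infer $A\rightarrow C$; from $A\rightarrow B$ and $A\rightarrow C$ infer $A\rightarrow(B\wedge C)$; from $A\rightarrow C$ and $B\rightarrow C$ infer $(A\vee B)\rightarrow C$; from $A$ and $B$ infer $A\wedge B$; (${\sf N_2}$) from $C\rightarrow A\vee D$ and $C\wedge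 B\rightarrow D$ infer $(A\rightarrow B)\rightarrow(C\rightarrow D)$. $\vdash_{\sf WF_{N_2}}A$ means $A$ is a theorem of this system. $\bigwedge\Gamma$ is the conjunction of the members of $\Gamma$ (the empty conjunction read as $\top:=\bot\rightarrow\bot$). *)

(* Defs.v *)
From Stdlib Require Import List Permutation.
Import ListNotations.

(* One syntax for Frm2; Frm and Frm2 are carved out by predicates so that
   Frm is literally a subset of Frm2 (as in the paper). *)
Inductive form : Type :=
| Atom : nat -> form
| Bot : form
| And : form -> form -> form
| Or : form -> form -> form
| Imp : form -> form -> form      (* strict implication  -> *)
| MImp : form -> form -> form.    (* material implication  ⊃ *)

Fixpoint is_frm (A : form) : Prop :=
  match A with
  | Atom _ | Bot => True
  | And A B | Or A B | Imp A B => is_frm A /\ is_frm B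
  | MImp _ _ => False
  end.

Fixpoint is_frm2 (X : form) : Prop :=
  match X with
  | Atom _ | Bot => True
  | And X Y | Or X Y => is_frm2 X /\ is_frm2 Y
  | Imp A B | MImp A B => is_frm A /\ is_frm B
  end.

Definition Top : form := Imp Bot Bot.

Fixpoint bigAnd (l : list form) : form :=
  match l with
  | [] => Top
  | [A] => A
  | A :: l' => And A (bigAnd l')
  end.

Inductive WF : form -> Prop :=
| ax_or1 A B : is_frm A -> is_frm B -> WF (Imp A (Or A B))
| ax_or2 A B : is_frm A -> is_frm B -> WF (Imp B (Or A B))
| ax_and1 A B : is_frm A -> is_frm B -> WF (Imp (And A B) A)
| ax_and2 A B : is_frm A -> is_frm B -> WF (Imp (And A B) B)
| ax_dist A B C : is_frm A -> is_frm B -> is_frm C ->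
    WF (Imp (And A (Or B C)) (Or (And A B) (And A C)))
| ax_id A : is_frm A -> WF (Imp A A)
| ax_bot A : is_frm A -> WF (Imp Bot A)
| r_mp A B : WF A -> WF (Imp A B) -> WF B
| r_k A B : is_frm B -> WF A -> WF (Imp B A)
| r_trans A B C : WF (Imp A B) -> WF (Imp B C) -> WF (Imp A C)
| r_andI A B C : WF (Imp A B) -> WF (Imp A C) -> WF (Imp A (And B C))
| r_orE A B C : WF (Imp A C) -> WF (Imp B C) -> WF (Imp (Or A B) C)
| r_adj A B : WF A -> WF B -> WF (And A B)
| r_N2 A B C D : WF (Imp C (Or A D)) -> WF (Imp (And C B) D) ->
    WF (Imp (Imp A B) (Imp C D)).

Definition wfseq (G D : list form) : Prop := Forall is_frm2 G /\ Forall is_frm2 D.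

(* Multisets are represented by lists; derivability is closed under
   permutation of either side (exchange), so that derivability of a list
   sequent is exactly derivability of its underlying multiset sequent. *)
Inductive GWF : list form -> list form -> Prop :=
| g_perm G D G' D' : GWF G D -> Permutation G G' -> Permutation D D' -> GWF G' D'
| g_id p G D : wfseq G D -> GWF (Atom p :: G) (Atom p :: D)
| g_bot G D : wfseq G D -> GWF (Bot :: G) D
| g_Land X Y G D : wfseq (And X Y :: G) D ->
    GWF (X :: Y :: G) D -> GWF (And X Y :: G) D
| g_Rand X Y G D : wfseq G (And X Y :: D) ->
    GWF G (X :: D) -> GWF G (Y :: D) -> GWF G (And X Y :: D)
| g_Lor X Y G D : wfseq (Or X Y :: G) D ->
    GWF (X :: G) D -> GWF (Y :: G) D -> GWF (Or X Y :: G) D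
| g_Ror X Y G D : wfseq G (Or X Y :: D) ->
    GWF G (X :: Y :: D) -> GWF G (Or X Y :: D)
| g_Lmimp A B G D : wfseq (MImp A B :: G) D ->
    GWF G (A :: D) -> GWF (B :: G) D -> GWF (MImp A B :: G) D
| g_Rmimp A B G D : wfseq G (MImp A B :: D) ->
    GWF (A :: G) (B :: D) -> GWF G (MImp A B :: D)
| g_LRimp A B C D G Dl : wfseq (Imp C D :: G) (Imp A B :: Dl) ->
    GWF [MImp C D; A] [B] -> GWF (Imp C D :: G) (Imp A B :: Dl)
| g_Rimp A B G D : wfseq G (Imp A B :: D) ->
    GWF [A] [B] -> GWF G (Imp A B :: D).

Definition wfseqs (G : list form) (Z : form) : Prop := Forall is_frm2 G /\ is_frm2 Z.

Inductive GWFs : list form -> form -> Prop :=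
| s_perm G G' Z : GWFs G Z -> Permutation G G' -> GWFs G' Z
| s_id p G : wfseqs G (Atom p) -> GWFs (Atom p :: G) (Atom p)
| s_bot G Z : wfseqs G Z -> GWFs (Bot :: G) Z
| s_Land X Y G Z : wfseqs (And X Y :: G) Z ->
    GWFs (X :: Y :: G) Z -> GWFs (And X Y :: G) Z
| s_Rand X Y G : wfseqs G (And X Y) ->
    GWFs G X -> GWFs G Y -> GWFs G (And X Y)
| s_Lor X Y G Z : wfseqs (Or X Y :: G) Z ->
    GWFs (X :: G) Z -> GWFs (Y :: G) Z -> GWFs (Or X Y :: G) Z
| s_Rorl X Y G : wfseqs G (Or X Y) -> GWFs G X -> GWFs G (Or X Y)
| s_Rorr X Y G : wfseqs G (Or X Y) -> GWFs G Y -> GWFs G (Or X Y)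
| s_Lmimp A B G Z : wfseqs (MImp A B :: G) Z ->
    GWFs (MImp A B :: G) A -> GWFs (B :: G) Z -> GWFs (MImp A B :: G) Z
| s_Rmimp A B G : wfseqs G (MImp A B) ->
    GWFs (A :: G) B -> GWFs G (MImp A B)
| s_LRimp A B C D G : wfseqs (Imp C D :: G) (Imp A B) ->
    GWFs [MImp C D; A] B -> GWFs (Imp C D :: G) (Imp A B)
| s_Rimp A B G : wfseqs G (Imp A B) ->
    GWFs [A] B -> GWFs G (Imp A B).

(* Main.v *)
Require Import Defs.
From Stdlib Require Import List Permutation Arith Lia Classical.
Import ListNotations.

Fixpoint impc (x : form) : nat := match x with
 | Atom _ | Bot => 0
 | And a b | Or a b | MImp a b => impc a + impc b
 | Imp a b => S (impc a + impc b) end.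

Fixpoint cc (x:form) : nat := match x with
 | And a b | Or a b | MImp a b => S (cc a + cc b)
 | _ => 0 end.

Fixpoint ccl (l : list form) : nat := match l with [] => 0 | x::l => cc x + ccl l end.

Definition lit (x:form) : Prop := match x with Atom _ | Bot | Imp _ _ => True | _ => False end.

Fixpoint eval (v : form -> Prop) (x:form) : Prop := match x with
 | Atom p => v (Atom p) | Bot => False
 | And a b => eval v a /\ eval v b | Or a b => eval v a \/ eval v b
 | MImp a b => eval v a -> eval v b | Imp a b => v (Imp a b) end.

Definition bnd K (l : list form) := forall x, In x l -> impc x <= K.

Definition respects K (v : form -> Prop) :=
 (forall A B, impc (Imp A B) <= K -> GWF [A] [B] -> v (Imp A B)) /\
 (forall A B C D, impc (Imp A B) <= K -> impc (Imp C D) <= K ->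
    GWF [MImp C D; A] [B] -> v (Imp C D) -> v (Imp A B)).

Definition Sem K G D := forall v, respects K v -> (forall x, In x G -> eval v x) ->
  exists y, In y D /\ eval v y.

Lemma Forall_perm {T} (P : T -> Prop) l l' : Forall P l -> Permutation l l' -> Forall P l'.
Proof. intros H Hp. rewrite Forall_forall in *. intros x Hx. apply H.
  eapply Permutation_in; [apply Permutation_sym; exact Hp| exact Hx]. Qed.

Lemma bnd_perm K l l' : bnd K l -> Permutation l l' -> bnd K l'.
Proof. intros H Hp x Hx. apply H. eapply Permutation_in; [apply Permutation_sym; exact Hp| exact Hx]. Qed.

Lemma bnd_cons K x l : bnd K (x::l) <-> impc x <= K /\ bnd K l.
Proof. unfold bnd; simpl; split.
  - intros H; split; [apply H; auto| intros; apply H; auto].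
  - intros [H1 H2] y [<-|Hy]; auto. Qed.

Lemma bnd_nil K : bnd K []. Proof. intros x []. Qed.

Ltac bnds := repeat match goal with
  | H : bnd _ (_ :: _) |- _ => apply bnd_cons in H; destruct H
  | |- bnd _ (_ :: _) => apply bnd_cons; split
  | |- bnd _ [] => apply bnd_nil
  end; cbn [impc] in *; try lia; try assumption.

Lemma GWF_wf G D : GWF G D -> wfseq G D.
Proof. intros H; induction H; try assumption.
  - destruct IHGWF; split; [apply (Forall_perm _ G)|apply (Forall_perm _ D)]; auto.
  - destruct H; split; constructor; simpl; auto.
  - destruct H; split; auto; constructor; simpl; auto. Qed.

Lemma sound K G D : GWF G D -> bnd K G -> bnd K D -> Sem K G D.
Proof.
  intro H; induction H; intros HG HD v Hv Hall.
  - destruct (IHGWF (bnd_perm _ _ _ HG (Permutation_sym H0)) (bnd_perm _ _ _ HD (Permutation_sym H1)) v Hv)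
      as [y [Hy Hey]].
    + intros x Hx; apply Hall; eapply Permutation_in; eauto.
    + exists y; split; auto. eapply Permutation_in; eauto.
  - exists (Atom p); split; [left; auto|]. apply (Hall (Atom p)); left; auto.
  - destruct (Hall Bot); left; auto.
  - bnds. apply IHGWF; bnds; auto.
    destruct (Hall (And X Y)) as [h1 h2]; [left; auto|].
    intros x [<-|[<-|Hx]]; auto. all: apply Hall; right; auto.
  - bnds. destruct (IHGWF1 HG ltac:(bnds; auto) v Hv Hall) as [y1 [[<-|Hy1] E1]];
      [| exists y1; split; [right|]; auto].
    destruct (IHGWF2 HG ltac:(bnds; auto) v Hv Hall) as [y2 [[<-|Hy2] E2]];
      [| exists y2; split; [right|]; auto].
    exists (And X Y); split; [left|split]; auto.
  - bnds. destruct (Hall (Or X Y)) as [h|h]; [left; auto| |].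
    + apply IHGWF1; bnds; auto. intros x [<-|Hx]; auto. apply Hall; right; auto.
    + apply IHGWF2; bnds; auto. intros x [<-|Hx]; auto. apply Hall; right; auto.
  - bnds. destruct (IHGWF HG ltac:(bnds; auto) v Hv Hall) as [y [[<-|[<-|Hy]] E]].
    + exists (Or X Y); split; [left|left]; auto.
    + exists (Or X Y); split; [left|right]; auto.
    + exists y; split; [right|]; auto.
  - bnds. destruct (IHGWF1 ltac:(assumption) ltac:(bnds; auto) v Hv ltac:(intros; apply Hall; right; auto))
      as [y [[<-|Hy] E]].
    + apply IHGWF2; bnds; auto. intros x [<-|Hx]; auto.
      * apply (Hall (MImp A B)); [left|]; auto.
      * apply Hall; right; auto.
    + exists y; split; auto.
  - bnds. destruct (classic (exists y, In y D /\ eval v y)) as [[y [Hy E]]|Hn].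
    + exists y; split; [right|]; auto.
    + exists (MImp A B); split; [left; auto|]. simpl. intros a.
      destruct (IHGWF ltac:(bnds; auto) ltac:(bnds; auto) v Hv) as [y [[<-|Hy] E]]; auto.
      * intros x [<-|Hx]; auto.
      * exfalso; apply Hn; eauto.
  - bnds. exists (Imp A B); split; [left; auto|]. simpl.
    destruct Hv as [_ Hv]. apply (Hv A B C D); auto.
    apply (Hall (Imp C D)); left; auto.
  - bnds. exists (Imp A B); split; [left; auto|]. simpl.
    destruct Hv as [Hv _]. apply Hv; auto.
Qed.


Lemma frm_frm2 A : is_frm A -> is_frm2 A.
Proof. induction A; simpl; tauto. Qed.

Lemma ccl_perm l l' : Permutation l l' -> ccl l = ccl l'.
Proof. induction 1; simpl; lia. Qed.

Lemma ccl_app l1 l2 : ccl (l1 ++ l2) = ccl l1 + ccl l2.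
Proof. induction l1; simpl; lia. Qed.

Lemma Sem_perm K G D G' D' : Sem K G D -> Permutation G G' -> Permutation D D' -> Sem K G' D'.
Proof. intros H H1 H2 v Hv Hall. destruct (H v Hv) as [y [Hy E]].
  - intros x Hx; apply Hall; eapply Permutation_in; eauto.
  - exists y; split; auto; eapply Permutation_in; eauto. Qed.

Lemma wf_perm G D G' D' : wfseq G D -> Permutation G G' -> Permutation D D' -> wfseq G' D'.
Proof. intros [H1 H2] P1 P2; split; [apply (Forall_perm _ G)|apply (Forall_perm _ D)]; auto. Qed.

Lemma in_perm {T} (x:T) l : In x l -> exists l0, Permutation (x::l0) l.
Proof. intros H; destruct (in_split _ _ H) as [l1 [l2 ->]].
  exists (l1++l2); apply Permutation_middle. Qed.

Definition Comp K := forall G D, wfseq G D -> bnd K G -> bnd K D -> Sem K G D -> GWF G D.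

Definition canon (G : list form) (x : form) : Prop := match x with
 | Atom p => In (Atom p) G
 | Imp A B => GWF [A] [B] \/ exists C E, In (Imp C E) G /\ GWF [MImp C E; A] [B]
 | _ => False end.

Lemma sem_use K G B v : Sem K G [B] -> respects K v -> (forall x, In x G -> eval v x) -> eval v B.
Proof. intros H Hv Hall. destruct (H v Hv Hall) as [y [[<-|[]] E]]; auto. Qed.

Lemma sem_intro K G B : (forall v, respects K v -> (forall x, In x G -> eval v x) -> eval v B) -> Sem K G [B].
Proof. intros H v Hv Hall. exists B; split; [left|]; auto. Qed.

Lemma canon_ok K G : (forall K', K' < K -> Comp K') -> Forall lit G -> Forall is_frm2 G -> bnd K G ->
  respects K (canon G) /\ (forall x, In x G -> x <> Bot -> eval (canon G) x).
Proof.
  intros IH HL HW HB. split; [split|].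
  - intros A B _ H; simpl; auto.
  - intros A B X Y HAB HXY H HX. simpl in HX |- *.
    destruct (GWF_wf _ _ H) as [W1 W2].
    inversion W1; subst. inversion H3; subst. inversion W2; subst. simpl in H2. destruct H2 as [FX FY].
    simpl in HAB, HXY.
    destruct HX as [HX|[C [E [HCE HX]]]].
    + left. apply (IH (K-1)); [lia| split; auto| bnds | bnds |].
      apply sem_intro; intros v Hv Hall.
      assert (E1 := sem_use _ _ _ v (sound (K-1) _ _ HX ltac:(bnds) ltac:(bnds)) Hv).
      apply (sem_use _ _ _ v (sound (K-1) _ _ H ltac:(bnds) ltac:(bnds)) Hv).
      intros z [<-|[<-|[]]]; simpl.
      * intros hx; apply E1; intros z [<-|[]]; auto.
      * apply Hall; left; auto.
    + right. exists C, E; split; auto.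
      assert (HC := HB _ HCE). simpl in HC.
      assert (WC : is_frm2 (Imp C E)) by (rewrite Forall_forall in HW; auto).
      simpl in WC. destruct WC as [FC FE].
      apply (IH (K-1)); [lia| split; repeat constructor; simpl; auto; apply frm_frm2; auto| bnds | bnds |].
      apply sem_intro; intros v Hv Hall.
      assert (E1 := sem_use _ _ _ v (sound (K-1) _ _ HX ltac:(bnds) ltac:(bnds)) Hv).
      apply (sem_use _ _ _ v (sound (K-1) _ _ H ltac:(bnds) ltac:(bnds)) Hv).
      intros z [<-|[<-|[]]]; simpl.
      * intros hx; apply E1; intros z [<-|[<-|[]]]; auto.
        -- apply (Hall (MImp C E)); left; auto.
      * apply Hall; right; left; auto.
  - intros x Hx Hb. rewrite Forall_forall in HL, HW. assert (L := HL _ Hx).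
    destruct x; simpl in L |- *; try contradiction; auto.
    right. exists x1, x2; split; auto.
    assert (W := HW _ Hx). simpl in W. destruct W.
    assert (HC := HB _ Hx). simpl in HC.
    apply (IH (K-1)); [lia| split; repeat constructor; simpl; auto; apply frm_frm2; auto| bnds | bnds |].
    apply sem_intro; intros v Hv Hall. simpl in Hall.
    apply (Hall (MImp x1 x2)); auto. apply Hall; auto.
Qed.


Definition cond (G D : list form) : Prop :=
  In Bot G \/ (exists p, In (Atom p) G /\ In (Atom p) D) \/
  (exists A B, In (Imp A B) D /\ (GWF [A] [B] \/ exists C E, In (Imp C E) G /\ GWF [MImp C E; A] [B])).

Lemma lit_cond K G D : (forall K', K' < K -> Comp K') -> Forall lit G -> Forall lit D ->
  wfseq G D -> bnd K G -> Sem K G D -> cond G D.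
Proof.
  intros IH HL HLD [W1 W2] HB HS.
  destruct (classic (cond G D)) as [c|nc]; auto. exfalso.
  destruct (canon_ok K G IH HL W1 HB) as [Hr Ht].
  destruct (HS (canon G) Hr) as [y [Hy E]].
  - intros x Hx. apply Ht; auto. intros ->. apply nc; left; auto.
  - rewrite Forall_forall in HLD. assert (L := HLD _ Hy).
    destruct y; simpl in L, E; try contradiction; apply nc; right.
    + left; exists n; auto.
    + right; exists y1, y2; auto.
Qed.

Lemma cond_GWF G D : wfseq G D -> cond G D -> GWF G D.
Proof.
  intros W [H|[[p [H1 H2]]|[A [B [H1 [H2|[C [E [H3 H2]]]]]]]]].
  - destruct (in_perm _ _ H) as [G0 P]. eapply g_perm; [|exact P|apply Permutation_refl].
    apply g_bot. destruct (wf_perm _ _ _ _ W (Permutation_sym P) (Permutation_refl D)) as [W1 W2].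
    inversion W1; split; auto.
  - destruct (in_perm _ _ H1) as [G0 P]. destruct (in_perm _ _ H2) as [D0 P'].
    eapply g_perm; [|exact P|exact P'].
    apply g_id. destruct (wf_perm _ _ _ _ W (Permutation_sym P) (Permutation_sym P')) as [W1 W2].
    inversion W1; inversion W2; split; auto.
  - destruct (in_perm _ _ H1) as [D0 P'].
    eapply g_perm; [|apply Permutation_refl|exact P'].
    apply g_Rimp; auto. apply (wf_perm _ _ _ _ W (Permutation_refl _) (Permutation_sym P')).
  - destruct (in_perm _ _ H1) as [D0 P']. destruct (in_perm _ _ H3) as [G0 P].
    eapply g_perm; [|exact P|exact P'].
    apply g_LRimp; auto. apply (wf_perm _ _ _ _ W (Permutation_sym P) (Permutation_sym P')).
Qed.

Lemma nonlit_or_lit (l : list form) : (exists x l0, Permutation (x::l0) l /\ ~ lit x) \/ Forall lit l.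
Proof.
  destruct (classic (exists x, In x l /\ ~ lit x)) as [[x [Hx Hn]]|Hn].
  - left. destruct (in_perm _ _ Hx) as [l0 P]. eauto.
  - right. rewrite Forall_forall. intros x Hx. apply NNPP. intro. apply Hn; eauto.
Qed.

Lemma Forall_cons_inv {T} (P : T -> Prop) x l : Forall P (x::l) -> P x /\ Forall P l.
Proof. intros H; inversion H; auto. Qed.

Theorem completeness K : Comp K.
Proof.
  induction K as [K IH] using lt_wf_ind.
  assert (forall n G D, ccl G + ccl D <= n -> wfseq G D -> bnd K G -> bnd K D -> Sem K G D -> GWF G D).
  2:{ intros G D; apply (H (ccl G + ccl D)); lia. }
  induction n as [|n IHn]; intros G D Hn W HG HD HS.
  all: destruct (nonlit_or_lit G) as [[x [G0 [P Hx]]]|LG].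
  all: try (assert (ccl G = cc x + ccl G0) by (rewrite <- (ccl_perm _ _ P); reflexivity);
            destruct x; simpl in Hx; try contradiction; simpl in *; lia).
  2:{
    eapply g_perm; [|exact P|apply Permutation_refl].
    assert (HC : ccl G = cc x + ccl G0) by (rewrite <- (ccl_perm _ _ P); reflexivity).
    pose proof (Sem_perm _ _ _ _ _ HS (Permutation_sym P) (Permutation_refl D)) as S'.
    pose proof (wf_perm _ _ _ _ W (Permutation_sym P) (Permutation_refl D)) as W'.
    pose proof (bnd_perm _ _ _ HG (Permutation_sym P)) as B'.
    destruct W' as [W1 W2]. apply Forall_cons_inv in W1. destruct W1 as [Wx W1].
    destruct x; simpl in Hx; try contradiction; simpl in HC, Wx.
    - apply g_Land; [split; auto; constructor; simpl; auto|].
      apply IHn; [simpl; lia| split; auto; repeat constructor; tauto| bnds | auto |].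
      intros v Hv Hall. apply S'; auto. intros z [<-|Hz]; [split|]; apply Hall; simpl; auto.
    - apply g_Lor; [split; auto; constructor; simpl; auto| |].
      + apply IHn; [simpl; lia| split; auto; repeat constructor; tauto| bnds | auto |].
        intros v Hv Hall. apply S'; auto. intros z [<-|Hz]; [left|]; apply Hall; simpl; auto.
      + apply IHn; [simpl; lia| split; auto; repeat constructor; tauto| bnds | auto |].
        intros v Hv Hall. apply S'; auto. intros z [<-|Hz]; [right|]; apply Hall; simpl; auto.
    - destruct Wx as [F1 F2]. apply g_Lmimp; [split; auto; constructor; simpl; auto| |].
      + apply IHn; [simpl; lia| split; auto; constructor; auto; apply frm_frm2; auto| bnds | bnds |].
        intros v Hv Hall. destruct (classic (eval v x1)) as [e|ne].
        * exists x1; split; [left|]; auto.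
        * destruct (S' v Hv) as [y [Hy E]].
          -- intros z [<-|Hz]; [simpl; tauto| apply Hall; auto].
          -- exists y; split; [right|]; auto.
      + apply IHn; [simpl; lia| split; auto; constructor; auto; apply frm_frm2; auto| bnds | bnds |].
        intros v Hv Hall. apply S'; auto. intros z [<-|Hz]; [simpl; intros; apply Hall; simpl; auto|].
        apply Hall; simpl; auto. }
  all: destruct (nonlit_or_lit D) as [[x [D0 [P Hx]]]|LD].
  all: try (assert (ccl D = cc x + ccl D0) by (rewrite <- (ccl_perm _ _ P); reflexivity);
            destruct x; simpl in Hx; try contradiction; simpl in *; lia).
  2:{
    eapply g_perm; [|apply Permutation_refl|exact P].
    assert (HC : ccl D = cc x + ccl D0) by (rewrite <- (ccl_perm _ _ P); reflexivity).
    pose proof (Sem_perm _ _ _ _ _ HS (Permutation_refl G) (Permutation_sym P)) as S'.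
    pose proof (wf_perm _ _ _ _ W (Permutation_refl G) (Permutation_sym P)) as W'.
    pose proof (bnd_perm _ _ _ HD (Permutation_sym P)) as B'.
    destruct W' as [W1 W2]. apply Forall_cons_inv in W2. destruct W2 as [Wx W2].
    destruct x; simpl in Hx; try contradiction; simpl in HC, Wx.
    - apply g_Rand; [split; auto; constructor; simpl; auto| |].
      + apply IHn; [simpl; lia| split; auto; repeat constructor; tauto| auto | bnds |].
        intros v Hv Hall. destruct (S' v Hv Hall) as [y [[<-|Hy] E]].
        * exists x1; split; [left|]; simpl in E; tauto.
        * exists y; split; [right|]; auto.
      + apply IHn; [simpl; lia| split; auto; repeat constructor; tauto| auto | bnds |].
        intros v Hv Hall. destruct (S' v Hv Hall) as [y [[<-|Hy] E]].
        * exists x2; split; [left|]; simpl in E; tauto.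
        * exists y; split; [right|]; auto.
    - apply g_Ror; [split; auto; constructor; simpl; auto| ].
      apply IHn; [simpl; lia| split; auto; repeat constructor; tauto| auto | bnds |].
      intros v Hv Hall. destruct (S' v Hv Hall) as [y [[<-|Hy] E]].
      * destruct E as [E|E]; [exists x1|exists x2]; split; simpl; auto.
      * exists y; split; simpl; auto.
    - destruct Wx as [F1 F2]. apply g_Rmimp; [split; auto; constructor; simpl; auto| ].
      apply IHn; [simpl; lia| split; constructor; auto; apply frm_frm2; auto| bnds | bnds |].
      intros v Hv Hall. destruct (S' v Hv) as [y [[<-|Hy] E]].
      * intros z Hz; apply Hall; right; auto.
      * exists x2; split; [left|]; auto. apply E. apply Hall; left; auto.
      * exists y; split; [right|]; auto. }
  all: apply cond_GWF; auto; eapply lit_cond; eauto.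
Qed.


Lemma WF_frm F : WF F -> is_frm F.
Proof. induction 1; simpl in *; tauto. Qed.

Definition le X Y := WF (Imp X Y).

Lemma le_frm X Y : le X Y -> is_frm X /\ is_frm Y.
Proof. intro H; apply WF_frm in H; exact H. Qed.

Ltac frms := repeat match goal with
  | H : le _ _ |- _ => let h := fresh in pose proof (le_frm _ _ H) as h; revert H;
       simpl in h; destruct h as [? ?]
  end; intros.

Lemma le_refl X : is_frm X -> le X X. Proof. apply ax_id. Qed.
Lemma le_trans X Y Z : le X Y -> le Y Z -> le X Z. Proof. apply r_trans. Qed.
Lemma le_and1 X Y : is_frm X -> is_frm Y -> le (And X Y) X. Proof. apply ax_and1. Qed.
Lemma le_and2 X Y : is_frm X -> is_frm Y -> le (And X Y) Y. Proof. apply ax_and2. Qed.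
Lemma le_andI X Y Z : le X Y -> le X Z -> le X (And Y Z). Proof. apply r_andI. Qed.
Lemma le_or1 X Y : is_frm X -> is_frm Y -> le X (Or X Y). Proof. apply ax_or1. Qed.
Lemma le_or2 X Y : is_frm X -> is_frm Y -> le Y (Or X Y). Proof. apply ax_or2. Qed.
Lemma le_orE X Y Z : le X Z -> le Y Z -> le (Or X Y) Z. Proof. apply r_orE. Qed.
Lemma le_bot X : is_frm X -> le Bot X. Proof. apply ax_bot. Qed.
Lemma le_dist X Y Z : is_frm X -> is_frm Y -> is_frm Z -> le (And X (Or Y Z)) (Or (And X Y) (And X Z)).
Proof. apply ax_dist. Qed.
Lemma le_thm X T : is_frm X -> WF T -> le X T. Proof. intros; apply r_k; auto. Qed.

Lemma top_thm : WF Top. Proof. apply ax_id; simpl; auto. Qed.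
Lemma top_frm : is_frm Top. Proof. simpl; auto. Qed.

Lemma le_andm X Y X' Y' : le X X' -> le Y Y' -> le (And X Y) (And X' Y').
Proof. intros. frms. apply le_andI; eapply le_trans; [apply le_and1| |apply le_and2|]; eauto. Qed.

Lemma le_orm X Y X' Y' : le X X' -> le Y Y' -> le (Or X Y) (Or X' Y').
Proof. intros. frms. apply le_orE; eapply le_trans; [| apply le_or1 | |apply le_or2]; eauto. Qed.

Lemma le_andC X Y : is_frm X -> is_frm Y -> le (And X Y) (And Y X).
Proof. intros; apply le_andI; [apply le_and2|apply le_and1]; auto. Qed.

Lemma le_andA X Y Z : is_frm X -> is_frm Y -> is_frm Z -> le (And (And X Y) Z) (And X (And Y Z)).
Proof. intros. apply le_andI; [|apply le_andI].
  - eapply le_trans; apply le_and1; simpl; auto.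
  - eapply le_trans; [apply le_and1|apply le_and2]; simpl; auto.
  - apply le_and2; simpl; auto. Qed.

Lemma le_orA X Y Z : is_frm X -> is_frm Y -> is_frm Z -> le (Or X (Or Y Z)) (Or (Or X Y) Z).
Proof. intros. apply le_orE; [|apply le_orE].
  - eapply le_trans; apply le_or1; simpl; auto.
  - eapply le_trans; [apply le_or2|apply le_or1]; simpl; auto.
  - apply le_or2; simpl; auto. Qed.

Lemma le_distl X Y Z : is_frm X -> is_frm Y -> is_frm Z -> le (And (Or X Y) Z) (Or (And X Z) (And Y Z)).
Proof. intros. eapply le_trans; [apply le_andC; simpl; auto|].
  eapply le_trans; [apply le_dist; auto|]. apply le_orm; apply le_andC; auto. Qed.

Lemma le_dual X Y D : is_frm X -> is_frm Y -> is_frm D -> le (And (Or X D) (Or Y D)) (Or (And X Y) D).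
Proof. intros. eapply le_trans; [apply le_dist; simpl; auto|]. apply le_orE.
  - eapply le_trans; [apply le_andC; simpl; auto|].
    eapply le_trans; [apply le_dist; simpl; auto|]. apply le_orE.
    + eapply le_trans; [apply le_andC; auto|]. apply le_or1; simpl; auto.
    + eapply le_trans; [apply le_and2; auto|]. apply le_or2; simpl; auto.
  - eapply le_trans; [apply le_and2; simpl; auto|]. apply le_or2; simpl; auto.
Qed.

Fixpoint cj (l : list form) : form := match l with [] => Top | x :: l => And x (cj l) end.
Fixpoint dj (l : list form) : form := match l with [] => Bot | x :: l => Or x (dj l) end.

Lemma cj_frm l : Forall is_frm l -> is_frm (cj l).
Proof. induction 1; simpl; auto. Qed.
Lemma dj_frm l : Forall is_frm l -> is_frm (dj l).
Proof. induction 1; simpl; auto. Qed.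

Lemma cj_perm l l' : Permutation l l' -> Forall is_frm l -> le (cj l) (cj l').
Proof. induction 1; intros F; simpl.
  - apply le_refl; simpl; auto.
  - inversion F; subst. apply le_andm; auto. apply le_refl; auto.
  - inversion F; subst. inversion H2; subst. pose proof (cj_frm _ H4).
    apply le_andI; [eapply le_trans; [apply le_and2|apply le_and1]; simpl; auto|].
    apply le_andm; [apply le_refl|apply le_and2]; simpl; auto.
  - eapply le_trans; [apply IHPermutation1; auto| apply IHPermutation2].
    eapply Forall_perm; eauto.
Qed.

Lemma dj_perm l l' : Permutation l l' -> Forall is_frm l -> le (dj l) (dj l').
Proof. induction 1; intros F; simpl.
  - apply le_refl; simpl; auto.
  - inversion F; subst. apply le_orm; auto. apply le_refl; auto.
  - inversion F; subst. inversion H2; subst. pose proof (dj_frm _ H4).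
    apply le_orE; [eapply le_trans; [apply le_or1|apply le_or2]; simpl; auto|].
    apply le_orm; [apply le_refl|apply le_or2]; simpl; auto.
  - eapply le_trans; [apply IHPermutation1; auto| apply IHPermutation2].
    eapply Forall_perm; eauto.
Qed.

Lemma cj_in x l : Forall is_frm l -> In x l -> le (cj l) x.
Proof. induction 1; simpl; [tauto|]. intros [<-|Hx].
  - apply le_and1; auto; apply cj_frm; auto.
  - eapply le_trans; [apply le_and2|]; auto. apply cj_frm; auto. Qed.

Lemma dj_in x l : Forall is_frm l -> In x l -> le x (dj l).
Proof. induction 1; simpl; [tauto|]. intros [<-|Hx].
  - apply le_or1; auto; apply dj_frm; auto.
  - eapply le_trans; [|apply le_or2]; auto. apply dj_frm; auto. Qed.

Definition LS G D := le (cj G) (dj D).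

Lemma LS_frm G D : LS G D -> is_frm (cj G) /\ is_frm (dj D).
Proof. apply le_frm. Qed.

Lemma LS_perm G D G' D' : LS G D -> Permutation G G' -> Permutation D D' -> Forall is_frm G' -> Forall is_frm D -> LS G' D'.
Proof. intros H P1 P2 F1 F2. eapply le_trans; [apply cj_perm; [apply Permutation_sym; exact P1| auto]|].
  eapply le_trans; [exact H| apply dj_perm; auto]. Qed.

Lemma LS_andL X Y G D : LS (X::Y::G) D -> LS (And X Y :: G) D.
Proof. unfold LS; simpl; intros H. pose proof (le_frm _ _ H) as [h1 h2]. simpl in h1.
  eapply le_trans; [apply le_andA; tauto| exact H]. Qed.

Lemma LS_orR X Y G D : LS G (X::Y::D) -> LS G (Or X Y :: D).
Proof. unfold LS; simpl; intros H. pose proof (le_frm _ _ H) as [h1 h2]. simpl in h2.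
  eapply le_trans; [exact H| apply le_orA; tauto]. Qed.

Lemma LS_orL X Y G D : LS (X::G) D -> LS (Y::G) D -> LS (Or X Y :: G) D.
Proof. unfold LS; simpl; intros H1 H2. pose proof (le_frm _ _ H1) as [h1 h2].
  pose proof (le_frm _ _ H2) as [h3 h4]. simpl in *.
  eapply le_trans; [apply le_distl; tauto| apply le_orE; auto]. Qed.

Lemma LS_andR X Y G D : LS G (X::D) -> LS G (Y::D) -> LS G (And X Y :: D).
Proof. unfold LS; simpl; intros H1 H2. pose proof (le_frm _ _ H1) as [h1 h2].
  pose proof (le_frm _ _ H2) as [h3 h4]. simpl in *.
  eapply le_trans; [apply le_andI; [exact H1|exact H2]| apply le_dual; tauto]. Qed.

Lemma LS1 A B : LS [A] [B] -> le A B.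
Proof. unfold LS; simpl; intros H. pose proof (le_frm _ _ H) as [h1 h2]. simpl in *.
  eapply le_trans; [|eapply le_trans; [exact H|]].
  - apply le_andI; [apply le_refl| apply le_thm; [|apply top_thm]]; tauto.
  - apply le_orE; [apply le_refl|apply le_bot]; tauto. Qed.

Lemma LS2 A C B : LS [A] [C;B] -> le A (Or C B).
Proof. unfold LS; simpl; intros H. pose proof (le_frm _ _ H) as [h1 h2]. simpl in *.
  eapply le_trans; [|eapply le_trans; [exact H|]].
  - apply le_andI; [apply le_refl| apply le_thm; [|apply top_thm]]; tauto.
  - apply le_orm; [apply le_refl|apply le_orE; [apply le_refl|apply le_bot]]; tauto. Qed.

Lemma LS3 A E B : LS [A;E] [B] -> le (And A E) B.
Proof. unfold LS; simpl; intros H. pose proof (le_frm _ _ H) as [h1 h2]. simpl in *.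
  eapply le_trans; [|eapply le_trans; [exact H|]].
  - apply le_andm; [apply le_refl|apply le_andI; [apply le_refl| apply le_thm; [|apply top_thm]]]; tauto.
  - apply le_orE; [apply le_refl|apply le_bot]; tauto. Qed.

Lemma Forall_frm2 l : Forall is_frm l -> Forall is_frm2 l.
Proof. intros; eapply Forall_impl; [|eauto]. apply frm_frm2. Qed.

Lemma lit_LS K G D : (forall m, m < K -> forall G D, Forall is_frm G -> Forall is_frm D -> bnd m G -> bnd m D -> Sem m G D -> LS G D) ->
  Forall is_frm G -> Forall is_frm D -> bnd K G -> bnd K D -> cond G D -> LS G D.
Proof.
  intros IH FG FD HG HD CO.
  destruct CO as [H|[[p [H1 H2]]|[A [B [H1 [H2|[C [E [H3 H2]]]]]]]]].
  all: unfold LS.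
  1:
    (eapply le_trans; [apply cj_in; eauto| apply le_bot; apply dj_frm; auto]).
 (eapply le_trans; [apply cj_in; eauto| apply dj_in; eauto]).
  all: assert (FAB : is_frm (Imp A B)) by (rewrite Forall_forall in FD; auto).
  all: assert (BAB : impc (Imp A B) <= K) by auto.
  all: simpl in FAB, BAB.
  all: eapply le_trans; [|apply dj_in; eauto].
  - apply le_thm; [apply cj_frm; auto|]. apply LS1. apply (IH (K-1)); [lia| repeat constructor; tauto..| bnds| bnds|].
    apply sound; bnds.
  - assert (FCE : is_frm (Imp C E)) by (rewrite Forall_forall in FG; auto).
    assert (BCE : impc (Imp C E) <= K) by auto.
    simpl in FCE, BCE.
    pose proof (sound (K-1) _ _ H2 ltac:(bnds) ltac:(bnds)) as S0.
    eapply le_trans; [apply cj_in; eauto|]. apply r_N2.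
    + apply LS2. apply (IH (K-1)); [lia| repeat constructor; tauto..| bnds| bnds|].
      intros v Hv Hall. destruct (classic (eval v C)) as [e|ne].
      * exists C; split; simpl; auto.
      * exists B; split; simpl; auto. apply (sem_use _ _ _ v S0 Hv).
        intros z [<-|[<-|[]]]; simpl; [tauto| apply Hall; simpl; auto].
    + apply LS3. apply (IH (K-1)); [lia| repeat constructor; tauto..| bnds| bnds|].
      apply sem_intro. intros v Hv Hall. apply (sem_use _ _ _ v S0 Hv).
      intros z [<-|[<-|[]]]; simpl; [intros; apply Hall; simpl; auto| apply Hall; simpl; auto].
Qed.

Theorem hcomp K : forall G D, Forall is_frm G -> Forall is_frm D -> bnd K G -> bnd K D -> Sem K G D -> LS G D.
Proof.
  induction K as [K IH] using lt_wf_ind.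
  assert (forall n G D, ccl G + ccl D <= n -> Forall is_frm G -> Forall is_frm D -> bnd K G -> bnd K D -> Sem K G D -> LS G D).
  2:{ intros G D; apply (H (ccl G + ccl D)); lia. }
  induction n as [|n IHn]; intros G D Hn FG FD HG HD HS.
  all: destruct (nonlit_or_lit G) as [[x [G0 [P Hx]]]|LG].
  all: try (assert (ccl G = cc x + ccl G0) by (rewrite <- (ccl_perm _ _ P); reflexivity);
            destruct x; simpl in Hx; try contradiction; simpl in *; lia).
  2:{ assert (HC : ccl G = cc x + ccl G0) by (rewrite <- (ccl_perm _ _ P); reflexivity).
    pose proof (Sem_perm _ _ _ _ _ HS (Permutation_sym P) (Permutation_refl D)) as S'.
    pose proof (Forall_perm _ _ _ FG (Permutation_sym P)) as W1.
    pose proof (bnd_perm _ _ _ HG (Permutation_sym P)) as B'.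
    apply (LS_perm (x::G0) D); auto.
    apply Forall_cons_inv in W1. destruct W1 as [Wx W1].
    destruct x; simpl in Hx; try contradiction; simpl in HC, Wx.
    - apply LS_andL.
      apply IHn; [simpl; lia| repeat constructor; tauto| auto | bnds | auto |].
      intros v Hv Hall. apply S'; auto. intros z [<-|Hz]; [split|]; apply Hall; simpl; auto.
    - apply LS_orL.
      + apply IHn; [simpl; lia| repeat constructor; tauto| auto| bnds | auto |].
        intros v Hv Hall. apply S'; auto. intros z [<-|Hz]; [left|]; apply Hall; simpl; auto.
      + apply IHn; [simpl; lia| repeat constructor; tauto| auto| bnds | auto |].
        intros v Hv Hall. apply S'; auto. intros z [<-|Hz]; [right|]; apply Hall; simpl; auto.
    }
  all: destruct (nonlit_or_lit D) as [[x [D0 [P Hx]]]|LD].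
  all: try (assert (ccl D = cc x + ccl D0) by (rewrite <- (ccl_perm _ _ P); reflexivity);
            destruct x; simpl in Hx; try contradiction; simpl in *; lia).
  2:{ assert (HC : ccl D = cc x + ccl D0) by (rewrite <- (ccl_perm _ _ P); reflexivity).
    pose proof (Sem_perm _ _ _ _ _ HS (Permutation_refl G) (Permutation_sym P)) as S'.
    pose proof (Forall_perm _ _ _ FD (Permutation_sym P)) as W2.
    pose proof (bnd_perm _ _ _ HD (Permutation_sym P)) as B'.
    apply (LS_perm G (x::D0)); auto.
    apply Forall_cons_inv in W2. destruct W2 as [Wx W2].
    destruct x; simpl in Hx; try contradiction; simpl in HC, Wx.
    - apply LS_andR.
      + apply IHn; [simpl; lia| auto| repeat constructor; tauto| auto | bnds |].
        intros v Hv Hall. destruct (S' v Hv Hall) as [y [[<-|Hy] E]].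
        * exists x1; split; [left|]; simpl in E; tauto.
        * exists y; split; [right|]; auto.
      + apply IHn; [simpl; lia| auto| repeat constructor; tauto| auto | bnds |].
        intros v Hv Hall. destruct (S' v Hv Hall) as [y [[<-|Hy] E]].
        * exists x2; split; [left|]; simpl in E; tauto.
        * exists y; split; [right|]; auto.
    - apply LS_orR.
      apply IHn; [simpl; lia| auto| repeat constructor; tauto| auto | bnds |].
      intros v Hv Hall. destruct (S' v Hv Hall) as [y [[<-|Hy] E]].
      * destruct E as [E|E]; [exists x1|exists x2]; split; simpl; auto.
      * exists y; split; simpl; auto.
    }
  all: assert (CO : cond G D) by (eapply lit_cond; eauto;
         [intros; apply completeness| split; apply Forall_frm2; auto]).

  all: eapply lit_LS; eauto.
Qed.


Lemma GWFs_wf G Z : GWFs G Z -> wfseqs G Z.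
Proof. intros H; induction H; try assumption.
  - destruct IHGWFs; split; auto. apply (Forall_perm _ G); auto.
  - destruct H; split; auto; constructor; simpl; auto.
  - destruct H; split; auto; constructor; simpl; auto. Qed.

Lemma swap {T} (a b : T) l : Permutation (a::b::l) (b::a::l).
Proof. apply perm_swap. Qed.

Lemma weak G Z : GWFs G Z -> forall W, is_frm2 W -> GWFs (W::G) Z.
Proof.
  induction 1; intros W HW.
  - apply (s_perm (W::G)); [apply IHGWFs; auto| apply perm_skip; auto].
  - eapply s_perm; [apply s_id|apply swap]. destruct H; split; auto.
  - eapply s_perm; [apply s_bot|apply swap]. destruct H; split; auto.
  - eapply s_perm; [apply s_Land|apply swap].
    + destruct H; inversion H; subst; split; auto.
    + apply (s_perm (W::X::Y::G)); [apply IHGWFs; auto|].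
      eapply perm_trans; [apply swap|apply perm_skip, swap].
  - apply s_Rand; auto. destruct H; split; auto.
  - eapply s_perm; [apply s_Lor|apply swap].
    + destruct H; inversion H; subst; split; auto.
    + apply (s_perm (W::X::G)); [apply IHGWFs1; auto| apply swap].
    + apply (s_perm (W::Y::G)); [apply IHGWFs2; auto| apply swap].
  - apply s_Rorl; auto. destruct H; split; auto.
  - apply s_Rorr; auto. destruct H; split; auto.
  - eapply s_perm; [apply s_Lmimp|apply swap].
    + destruct H; inversion H; subst; split; auto.
    + apply (s_perm (W::MImp A B::G)); [apply IHGWFs1; auto| apply swap].
    + apply (s_perm (W::B::G)); [apply IHGWFs2; auto| apply swap].
  - apply s_Rmimp; [destruct H; split; auto|].
    apply (s_perm (W::A::G)); [apply IHGWFs; auto| apply swap].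
  - eapply s_perm; [apply s_LRimp; [|exact H0]|apply swap].
    destruct H as [H1 H2]; inversion H1; subst; split; auto.
  - apply s_Rimp; auto. destruct H; split; auto.
Qed.

Lemma ssound K G Z : GWFs G Z -> bnd K G -> impc Z <= K -> Sem K G [Z].
Proof.
  intro H; induction H; intros HG HZ; apply sem_intro; intros v Hv Hall.
  - apply (sem_use _ _ _ v (IHGWFs (bnd_perm _ _ _ HG (Permutation_sym H0)) HZ) Hv).
    intros x Hx; apply Hall; eapply Permutation_in; eauto.
  - apply (Hall (Atom p)); left; auto.
  - destruct (Hall Bot); left; auto.
  - bnds. apply (sem_use _ _ _ v (IHGWFs ltac:(bnds) HZ) Hv).
    destruct (Hall (And X Y)) as [h1 h2]; [left; auto|].
    intros x [<-|[<-|Hx]]; auto. apply Hall; right; auto.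
  - bnds. split; [apply (sem_use _ _ _ v (IHGWFs1 HG ltac:(lia)) Hv Hall)|
                  apply (sem_use _ _ _ v (IHGWFs2 HG ltac:(lia)) Hv Hall)].
  - bnds. destruct (Hall (Or X Y)) as [h|h]; [left; auto| |].
    + apply (sem_use _ _ _ v (IHGWFs1 ltac:(bnds) HZ) Hv). intros x [<-|Hx]; auto. apply Hall; right; auto.
    + apply (sem_use _ _ _ v (IHGWFs2 ltac:(bnds) HZ) Hv). intros x [<-|Hx]; auto. apply Hall; right; auto.
  - bnds. left. apply (sem_use _ _ _ v (IHGWFs HG ltac:(lia)) Hv Hall).
  - bnds. right. apply (sem_use _ _ _ v (IHGWFs HG ltac:(lia)) Hv Hall).
  - bnds. assert (EA := sem_use _ _ _ v (IHGWFs1 ltac:(bnds) ltac:(lia)) Hv Hall).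
    apply (sem_use _ _ _ v (IHGWFs2 ltac:(bnds) HZ) Hv).
    intros x [<-|Hx]; [|apply Hall; right; auto].
    apply (Hall (MImp A B)); [left; auto| exact EA].
  - bnds. simpl. intros a. apply (sem_use _ _ _ v (IHGWFs ltac:(bnds) ltac:(lia)) Hv).
    intros x [<-|Hx]; auto.
  - bnds. simpl. destruct Hv as [_ Hv]. apply (Hv A B C D); auto.
    + destruct (GWFs_wf _ _ H0) as [W1 W2].
      apply (completeness K [MImp C D; A] [B]); [split; auto; constructor; auto| bnds | bnds |].
      apply IHGWFs; bnds.
    + apply (Hall (Imp C D)); left; auto.
  - bnds. simpl. destruct Hv as [Hv _]. apply Hv; auto.
    destruct (GWFs_wf _ _ H0) as [W1 W2].
    apply (completeness K [A] [B]); [split; auto; constructor; auto| bnds | bnds |].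
    apply IHGWFs; bnds.
Qed.


Definition SC1 K := forall G Z, Forall is_frm G -> is_frm Z -> bnd K G -> impc Z <= K -> Sem K G [Z] -> GWFs G Z.
Definition SC2 K := forall C E G Z, Forall is_frm G -> is_frm C -> is_frm E -> is_frm Z ->
  impc C + impc E <= K -> bnd K G -> impc Z <= K -> Sem K (MImp C E :: G) [Z] -> GWFs (MImp C E :: G) Z.

Lemma construct K G : (forall m, m < K -> SC1 m /\ SC2 m) -> Forall lit G -> Forall is_frm G -> bnd K G ->
  forall Z, is_frm Z -> impc Z <= K -> eval (canon G) Z -> GWFs G Z.
Proof.
  intros IH LG FG BG Z. assert (WG := Forall_frm2 _ FG).
  induction Z; simpl; intros FZ BZ EZ; try contradiction.
  - destruct (in_perm _ _ EZ) as [G0 P]. eapply s_perm; [|exact P].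
    apply s_id. split; simpl; auto.
    assert (W' := Forall_perm _ _ _ WG (Permutation_sym P)). inversion W'; auto.
  - apply s_Rand; [split; simpl; auto; split; apply frm_frm2; tauto| apply IHZ1| apply IHZ2]; tauto || lia.
  - destruct EZ as [EZ|EZ]; [apply s_Rorl|apply s_Rorr];
      (split; [auto| simpl; split; apply frm_frm2; tauto]) || (apply IHZ1 || apply IHZ2); tauto || lia.
  - destruct EZ as [EZ|[C [E [HCE EZ]]]].
    + apply s_Rimp; [split; simpl; auto|]. destruct (IH (K-1)) as [S1 _]; [lia|].
      apply S1; [repeat constructor; tauto| tauto| bnds| lia|]. apply sound; bnds.
    + destruct (in_perm _ _ HCE) as [G0 P]. eapply s_perm; [|exact P].
      assert (FCE : is_frm (Imp C E)) by (rewrite Forall_forall in FG; auto).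
      assert (BCE := BG _ HCE). simpl in FCE, BCE.
      apply s_LRimp; [split; simpl; auto|].
      * apply (Forall_perm _ G); auto. apply Permutation_sym; auto.
      * destruct (IH (K-1)) as [_ S2]; [lia|].
        apply S2; [repeat constructor; tauto| tauto..| lia | bnds| lia|]. apply sound; bnds.
Qed.

Lemma sem_replace K Hd a bs G0 Z : Sem K (Hd ++ a :: G0) [Z] ->
  (forall v, (forall b, In b bs -> eval v b) -> eval v a) -> Sem K (Hd ++ bs ++ G0) [Z].
Proof.
  intros HS Ha. apply sem_intro; intros v Hv Hall. apply (sem_use _ _ _ v HS Hv).
  intros x Hx. apply in_app_or in Hx. destruct Hx as [Hx|[<-|Hx]].
  - apply Hall; apply in_or_app; auto.
  - apply Ha; intros b Hb; apply Hall; apply in_or_app; right; apply in_or_app; auto.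
  - apply Hall; apply in_or_app; right; apply in_or_app; auto.
Qed.

Lemma decompL K (Hd : list form) Z : Forall is_frm2 Hd -> is_frm Z ->
  (forall G, Forall lit G -> Forall is_frm G -> bnd K G -> Sem K (Hd ++ G) [Z] -> GWFs (Hd ++ G) Z) ->
  forall G, Forall is_frm G -> bnd K G -> Sem K (Hd ++ G) [Z] -> GWFs (Hd ++ G) Z.
Proof.
  intros WH FZ base.
  assert (forall n G, ccl G <= n -> Forall is_frm G -> bnd K G -> Sem K (Hd ++ G) [Z] -> GWFs (Hd ++ G) Z).
  2:{ intros G; apply (H (ccl G)); lia. }
  induction n as [|n IHn]; intros G Hn FG BG HS.
  all: destruct (nonlit_or_lit G) as [[x [G0 [P Hx]]]|LG]; [|apply base; auto].
  all: assert (HC : ccl G = cc x + ccl G0) by (rewrite <- (ccl_perm _ _ P); reflexivity).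
  1: (destruct x; simpl in Hx; try (exfalso; apply Hx; exact I); simpl in HC; try lia).
  pose proof (Sem_perm _ _ _ _ _ HS (Permutation_app_head Hd (Permutation_sym P)) (Permutation_refl _)) as S'.
  pose proof (Forall_perm _ _ _ FG (Permutation_sym P)) as W1.
  pose proof (bnd_perm _ _ _ BG (Permutation_sym P)) as B'.
  apply (s_perm (x :: Hd ++ G0)).
  2:{ eapply perm_trans; [apply Permutation_middle| apply Permutation_app_head; exact P]. }
  apply Forall_cons_inv in W1. destruct W1 as [Wx W1].
  assert (WW : Forall is_frm2 (x :: Hd ++ G0)).
  { constructor; [apply frm_frm2; auto|]. apply Forall_app; split; auto. apply Forall_frm2; auto. }
  destruct x; simpl in Hx; try contradiction; simpl in HC, Wx.
  - apply s_Land; [split; auto; apply frm_frm2; simpl; auto|].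
    apply (s_perm (Hd ++ [x1;x2] ++ G0)); [|apply Permutation_app_swap_app].
    apply IHn; [simpl; lia| repeat constructor; tauto| simpl; bnds|].
    refine (sem_replace K Hd (And x1 x2) [x1;x2] G0 Z S' _). intros v Hv; split; apply Hv; simpl; auto.
  - apply s_Lor; [split; auto; apply frm_frm2; simpl; auto| |].
    + apply (s_perm (Hd ++ [x1] ++ G0)); [|apply Permutation_app_swap_app].
      apply IHn; [simpl; lia| repeat constructor; tauto| simpl; bnds|].
      refine (sem_replace K Hd (Or x1 x2) [x1] G0 Z S' _). intros v Hv; left; apply Hv; simpl; auto.
    + apply (s_perm (Hd ++ [x2] ++ G0)); [|apply Permutation_app_swap_app].
      apply IHn; [simpl; lia| repeat constructor; tauto| simpl; bnds|].
      refine (sem_replace K Hd (Or x1 x2) [x2] G0 Z S' _). intros v Hv; right; apply Hv; simpl; auto.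
Qed.


Theorem scomp K : SC1 K /\ SC2 K.
Proof.
  induction K as [K IH] using lt_wf_ind.
  assert (S1 : SC1 K).
  { intros G Z FG FZ BG BZ HS.
    apply (decompL K [] Z); auto.
    intros G' LG FG' BG' HS'. simpl in *.
    destruct (classic (In Bot G')) as [Hb|Hb].
    - destruct (in_perm _ _ Hb) as [G0 P]. eapply s_perm; [|exact P].
      apply s_bot. split; [|apply frm_frm2; auto].
      assert (W' := Forall_perm _ _ _ (Forall_frm2 _ FG') (Permutation_sym P)). inversion W'; auto.
    - destruct (canon_ok K G' (fun m _ => completeness m) LG (Forall_frm2 _ FG') BG') as [Hr Ht].
      apply (construct K G' IH LG FG' BG' Z FZ BZ). apply (sem_use _ _ _ _ HS' Hr).
      intros x Hx; apply Ht; auto; intros ->; auto. }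
  split; auto.
  intros C E G Z FG FC FE FZ BCE BG BZ HS.
  apply (decompL K [MImp C E] Z); [constructor; simpl; auto| auto | | auto| auto| auto].
  intros G' LG FG' BG' HS'. simpl in HS' |- *.
  assert (WW : Forall is_frm2 (MImp C E :: G')) by (constructor; simpl; auto; apply Forall_frm2; auto).
  destruct (classic (In Bot G')) as [Hb|Hb].
  - destruct (in_perm _ _ Hb) as [G0 P]. apply (s_perm (Bot :: MImp C E :: G0)).
    + apply s_bot. split; [|apply frm_frm2; auto].
      assert (W' := Forall_perm _ _ _ WW (perm_skip _ (Permutation_sym P))).
      inversion W'; subst. inversion H2; subst. constructor; auto.
    + eapply perm_trans; [apply perm_swap| apply perm_skip; exact P].
  - destruct (canon_ok K G' (fun m _ => completeness m) LG (Forall_frm2 _ FG') BG') as [Hr Ht].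
    destruct (classic (eval (canon G') Z)) as [ez|nz].
    + apply weak; [|simpl; auto]. apply (construct K G' IH LG FG' BG' Z FZ BZ ez).
    + destruct (classic (eval (canon G') C)) as [ec|nc].
      * apply s_Lmimp; [split; auto; apply frm_frm2; auto| |].
        -- apply weak; [|simpl; auto]. apply (construct K G' IH LG FG' BG' C FC ltac:(lia) ec).
        -- apply S1; [constructor; auto| auto| bnds| auto|].
           apply sem_intro; intros v Hv Hall. apply (sem_use _ _ _ _ HS' Hv).
           intros x [<-|Hx]; [simpl; intros; apply Hall; left; auto| apply Hall; right; auto].
      * exfalso; apply nz. apply (sem_use _ _ _ _ HS' Hr).
        intros x [<-|Hx]; [simpl; intros; contradiction| apply Ht; auto; intros ->; auto].
Qed.

Lemma inv_imp X Y : GWF [] [Imp X Y] -> GWF [X] [Y].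
Proof.
  intros Hd. set (K := impc (Imp X Y)).
  assert (HS := sound K _ _ Hd (bnd_nil K) ltac:(bnds)).
  destruct (GWF_wf _ _ Hd) as [W1 W2].
  destruct (lit_cond K [] [Imp X Y] (fun m _ => completeness m) (Forall_nil _)
     ltac:(repeat constructor) (conj W1 W2) (bnd_nil K) HS)
    as [[]|[[p [[] _]]|[A [B [[E|[]] [H|[C [E' [[] _]]]]]]]]].
  injection E; intros; subst; auto.
Qed.

Lemma rimp X Y : is_frm X -> is_frm Y -> GWF [X] [Y] -> GWF [] [Imp X Y].
Proof. intros; apply g_Rimp; auto. split; repeat constructor; simpl; auto. Qed.

Lemma GWF_of K G D : Forall is_frm G -> Forall is_frm D -> bnd K G -> bnd K D -> Sem K G D -> GWF G D.
Proof. intros; apply (completeness K); auto. split; apply Forall_frm2; auto. Qed.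

Lemma nilall (v : form -> Prop) : forall x, In x [] -> eval v x.
Proof. intros x []. Qed.

Ltac fr := repeat constructor; simpl in *; tauto.

Lemma hsound F : WF F -> GWF [] [F].
Proof.
  induction 1.
  all: try (apply rimp; [simpl in *; tauto..|];
    apply (GWF_of (2*(impc A + impc B + impc C))); [fr..| bnds| bnds|];
    apply sem_intro; intros v Hv Hall; assert (h := Hall _ (or_introl eq_refl)); simpl in *; tauto).
  all: try (apply rimp; [simpl in *; tauto..|];
    apply (GWF_of (impc A + impc B)); [fr..| bnds| bnds|];
    apply sem_intro; intros v Hv Hall; assert (h := Hall _ (or_introl eq_refl)); simpl in *; tauto).
  all: try (apply rimp; [simpl in *; tauto..|];
    apply (GWF_of (impc A)); [fr..| bnds| bnds|];
    apply sem_intro; intros v Hv Hall; assert (h := Hall _ (or_introl eq_refl)); simpl in *; tauto).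
  -
    pose proof (WF_frm _ H0) as F. simpl in F.
    apply inv_imp in IHWF2. set (K := impc A + impc B).
    apply (GWF_of K); [fr..| bnds| bnds|].
    apply sem_intro; intros v Hv _.
    assert (eA := sem_use _ _ _ v (sound K _ _ IHWF1 (bnd_nil _) ltac:(bnds)) Hv (nilall v)).
    apply (sem_use _ _ _ v (sound K _ _ IHWF2 ltac:(bnds) ltac:(bnds)) Hv).
    intros x [<-|[]]; auto.
  - pose proof (WF_frm _ H0) as F. set (K := impc A + impc B).
    apply rimp; auto. apply (GWF_of K); [fr..| bnds| bnds|].
    apply sem_intro; intros v Hv _.
    apply (sem_use _ _ _ v (sound K _ _ IHWF (bnd_nil _) ltac:(bnds)) Hv (nilall v)).
  - pose proof (WF_frm _ H) as F1. pose proof (WF_frm _ H0) as F2. simpl in F1, F2.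
    apply inv_imp in IHWF1. apply inv_imp in IHWF2. set (K := impc A + impc B + impc C).
    apply rimp; [tauto..|]. apply (GWF_of K); [fr..| bnds| bnds|].
    apply sem_intro; intros v Hv Hall.
    assert (eB := sem_use _ _ _ v (sound K _ _ IHWF1 ltac:(bnds) ltac:(bnds)) Hv Hall).
    apply (sem_use _ _ _ v (sound K _ _ IHWF2 ltac:(bnds) ltac:(bnds)) Hv).
    intros x [<-|[]]; auto.
  - pose proof (WF_frm _ H) as F1. pose proof (WF_frm _ H0) as F2. simpl in F1, F2.
    apply inv_imp in IHWF1. apply inv_imp in IHWF2. set (K := impc A + impc B + impc C).
    apply rimp; [simpl; tauto..|]. apply (GWF_of K); [fr..| bnds| bnds|].
    apply sem_intro; intros v Hv Hall. simpl. split.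
    + apply (sem_use _ _ _ v (sound K _ _ IHWF1 ltac:(bnds) ltac:(bnds)) Hv Hall).
    + apply (sem_use _ _ _ v (sound K _ _ IHWF2 ltac:(bnds) ltac:(bnds)) Hv Hall).
  - pose proof (WF_frm _ H) as F1. pose proof (WF_frm _ H0) as F2. simpl in F1, F2.
    apply inv_imp in IHWF1. apply inv_imp in IHWF2. set (K := impc A + impc B + impc C).
    apply rimp; [simpl; tauto..|]. apply (GWF_of K); [fr..| bnds| bnds|].
    apply sem_intro; intros v Hv Hall. destruct (Hall _ (or_introl eq_refl)) as [h|h].
    + apply (sem_use _ _ _ v (sound K _ _ IHWF1 ltac:(bnds) ltac:(bnds)) Hv).
      intros x [<-|[]]; auto.
    + apply (sem_use _ _ _ v (sound K _ _ IHWF2 ltac:(bnds) ltac:(bnds)) Hv).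
      intros x [<-|[]]; auto.
  - pose proof (WF_frm _ H) as F1. pose proof (WF_frm _ H0) as F2. set (K := impc A + impc B).
    apply (GWF_of K); [fr..| bnds| bnds|].
    apply sem_intro; intros v Hv _. simpl. split.
    + apply (sem_use _ _ _ v (sound K _ _ IHWF1 (bnd_nil _) ltac:(bnds)) Hv (nilall v)).
    + apply (sem_use _ _ _ v (sound K _ _ IHWF2 (bnd_nil _) ltac:(bnds)) Hv (nilall v)).
  - pose proof (WF_frm _ H) as F1. pose proof (WF_frm _ H0) as F2. simpl in F1, F2.
    apply inv_imp in IHWF1. apply inv_imp in IHWF2. set (K := impc A + impc B + impc C + impc D).
    apply rimp; [simpl; tauto..|]. apply g_LRimp; [split; fr|].
    apply (completeness K [MImp A B; C] [D]); [split; repeat constructor; simpl in *; try tauto; apply frm_frm2; tauto| bnds| bnds|].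
    apply sem_intro; intros v Hv Hall.
    assert (eab := Hall _ (or_introl eq_refl)). assert (ec := Hall _ (or_intror (or_introl eq_refl))).
    simpl in eab.
    destruct (sem_use _ _ _ v (sound K _ _ IHWF1 ltac:(bnds) ltac:(bnds)) Hv
      ltac:(intros x [<-|[]]; auto)) as [ea|ed]; auto.
    apply (sem_use _ _ _ v (sound K _ _ IHWF2 ltac:(bnds) ltac:(bnds)) Hv).
    intros x [<-|[]]; simpl; auto.
Qed.


Lemma bigAnd_frm l : Forall is_frm l -> is_frm (bigAnd l).
Proof. induction 1; simpl; auto. destruct l; simpl in *; auto. Qed.

Lemma bigAnd_bnd l : bnd (impc (bigAnd l)) l.
Proof. induction l as [|x l IH]; intros y Hy; [destruct Hy|].
  destruct l as [|z l]; simpl in *.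
  - destruct Hy as [<-|[]]; lia.
  - destruct Hy as [<-|Hy]; [lia|]. specialize (IH y Hy). simpl in IH. lia. Qed.

Lemma bigAnd_eval K v l : 1 <= K -> respects K v -> (forall x, In x l -> eval v x) -> eval v (bigAnd l).
Proof. intros HK Hv. induction l as [|x l IH]; intros Hall.
  - simpl. destruct Hv as [Hv _]. apply Hv; simpl; [lia|]. apply g_bot. split; repeat constructor.
  - destruct l as [|z l].
    + apply Hall; left; auto.
    + simpl. split; [apply Hall; left; auto|]. apply IH. intros; apply Hall; right; auto. Qed.

Lemma bigAnd_cj l : Forall is_frm l -> le (bigAnd l) (cj l).
Proof. induction 1 as [|x l Fx Fl IH]; simpl.
  - apply le_refl; simpl; auto.
  - destruct l as [|z l]; simpl in *.
    + apply le_andI; [apply le_refl; auto| apply le_thm; [auto| apply top_thm]].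
    + apply le_andm; [apply le_refl; auto| exact IH]. Qed.

Theorem corollary5p7 (Gamma : list form) (A : form) :
  Forall is_frm Gamma -> NoDup Gamma -> is_frm A ->
  (WF (Imp (bigAnd Gamma) A) <-> GWF Gamma [A]) /\
  (GWF Gamma [A] <-> GWFs Gamma A).
Proof.
  intros FG _ FA.
  set (K := impc (bigAnd Gamma) + impc A + 1).
  assert (BG : bnd K Gamma) by (intros x Hx; pose proof (bigAnd_bnd Gamma x Hx); unfold K; lia).
  assert (BA : bnd K [A]) by bnds.
  assert (I2 : GWF Gamma [A] -> WF (Imp (bigAnd Gamma) A)).
  { intros Hd. pose proof (hcomp K Gamma [A] FG ltac:(repeat constructor; auto) BG BA
      (sound K _ _ Hd BG BA)) as L.
    unfold LS in L; simpl in L. eapply le_trans; [apply bigAnd_cj; auto|].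
    eapply le_trans; [exact L|]. apply le_orE; [apply le_refl| apply le_bot]; auto. }
  assert (I1 : WF (Imp (bigAnd Gamma) A) -> GWF Gamma [A]).
  { intros Hw. apply hsound, inv_imp in Hw.
    pose proof (sound K _ _ Hw ltac:(bnds) BA) as S0.
    apply (GWF_of K); auto.
    apply sem_intro; intros v Hv Hall. apply (sem_use _ _ _ v S0 Hv).
    intros x [<-|[]]. apply (bigAnd_eval K); auto. unfold K; lia. }
  split; split; auto.
  - intros Hd. destruct (scomp K) as [S1 _]. apply S1; auto; [bnds|].
    apply sound; auto.
  - intros Hd. apply (GWF_of K); auto. apply ssound; auto. bnds.
Qed.
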